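(* Let $M=\langle n_1,n_2,n_3\rangle$ be a numerical monoid of embedding dimension three with minimal generators $n_1<n_2<n_3$. Then $L(x+n_1)=L(x)+1$ for all $x\in M$, or $\ell(x+n_3)=\ell(x)+1$ for all $x\in M$.
   Context: $\mathbb{N}$ denotes the nonnegative integers. A numerical monoid is a submonoid of $\mathbb{N}$ with finite complement. For $x\in M$, $\mathsf{Z}(x)=\{(a_1,a_2,a_3)\in\mathbb{N}^3\mid a_1n_1+a_2n_2+a_3n_3=x\}$; $L(x)$ and $\ell(x)$ are the maximum and minimum of $a_1+a_2+a_3$ over $(a_1,a_2,a_3)\in\mathsf{Z}(x)$. *)

(* Defs.v *)
From mathcomp Require Import all_boot.
Set Implicit Arguments. Unset Strict Implicit. Unset Printing Implicit Defensive.

Definition inM3 (n1 n2 n3 x : nat) : Prop :=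
  exists a1 a2 a3, a1 * n1 + a2 * n2 + a3 * n3 = x.

Definition inM2 (a b x : nat) : Prop := exists c d, c * a + d * b = x.

Definition numerical3 (n1 n2 n3 : nat) : Prop :=
  exists F, forall x, F <= x -> inM3 n1 n2 n3 x.

Definition minimal_gens3 (n1 n2 n3 : nat) : Prop :=
  ~ inM2 n2 n3 n1 /\ ~ inM2 n1 n3 n2 /\ ~ inM2 n1 n2 n3.

Definition is_fact (n1 n2 n3 x a1 a2 a3 : nat) : bool :=
  a1 * n1 + a2 * n2 + a3 * n3 == x.

(* L(x): maximum of a1+a2+a3 over Z(x).  For positive generators every
   factorization has a_i <= x, so the search over a_i < x+1 is exhaustive. *)
Definition Lmax (n1 n2 n3 x : nat) : nat :=
  \max_(a1 < x.+1) \max_(a2 < x.+1) \max_(a3 < x.+1)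
     (if is_fact n1 n2 n3 x a1 a2 a3 then a1 + a2 + a3 else 0).

(* l(x): minimum of a1+a2+a3 over Z(x) (default x.+1 if Z(x) is empty,
   which never happens for x in M). *)
Definition lmin (n1 n2 n3 x : nat) : nat :=
  \big[minn/x.+1]_(a1 < x.+1) \big[minn/x.+1]_(a2 < x.+1)
     \big[minn/x.+1]_(a3 < x.+1)
     (if is_fact n1 n2 n3 x a1 a2 a3 then a1 + a2 + a3 else x.+1).

(* Main.v *)
Require Import Defs.
From mathcomp Require Import all_boot.
From mathcomp Require Import zify.
From Stdlib Require Import Classical.
Set Implicit Arguments. Unset Strict Implicit.

Lemma trade1 n1 n2 n3 A B C b c : 0 < n1 -> n1 < n2 -> n2 < n3 ->
  A.+1 * n1 + B * n2 + C * n3 = b * n2 + c * n3 -> A.+1 + B + C < b + c ->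
  B < b /\ c < C.
Proof.
move=> h1 h2 h3 e l.
have [Cc|cC] := leqP C c.
  exfalso. have [Bb|bB] := leqP b B.
    have : (A.+1 + (B - b)) * n3 > (c - C) * n3 by nia.
    nia.
  nia.
split=> //. nia.
Qed.

Lemma trade2 n1 n2 n3 p d E1 E2 E3 : 0 < n1 -> n1 < n2 -> n2 < n3 ->
  p * n1 + d * n2 = E1 * n1 + E2 * n2 + E3.+1 * n3 -> p + d < E1 + E2 + E3.+1 ->
  E2 < d /\ p < E1.
Proof.
move=> h1 h2 h3 e l.
have [pE|Ep] := leqP E1 p.
  exfalso. have [dE|Ed] := leqP d E2.
    nia. nia.
have [dE|Ed] := leqP d E2. exfalso; nia.
by [].
Qed.

Lemma fact_bound n1 n2 n3 x a1 a2 a3 : 0 < n1 -> n1 < n2 -> n2 < n3 ->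
  a1 * n1 + a2 * n2 + a3 * n3 = x ->
  [/\ a1 < x.+1, a2 < x.+1, a3 < x.+1 & a1 + a2 + a3 <= x].
Proof. move=> h1 h2 h3 e; split; nia. Qed.

Lemma bigmin_le_seq (I : eqType) (r : seq I) idx (F : I -> nat) i :
  i \in r -> \big[minn/idx]_(j <- r) F j <= F i.
Proof.
elim: r => // j r IH; rewrite in_cons big_cons => /orP[/eqP->|/IH].
  exact: geq_minl.
by move/(leq_trans _); apply; exact: geq_minr.
Qed.

Lemma bigmin_le (n : nat) idx (F : 'I_n -> nat) i :
  \big[minn/idx]_(j < n) F j <= F i.
Proof. exact: bigmin_le_seq (mem_index_enum i). Qed.

Lemma bigmin_ge (n : nat) idx (F : 'I_n -> nat) k :
  k <= idx -> (forall i, k <= F i) -> k <= \big[minn/idx]_(j < n) F j.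
Proof.
move=> hk hF; apply: (big_ind (fun v => k <= v)) => //.
by move=> u v hu hv; rewrite leq_min hu hv.
Qed.

Lemma Lmax_ge n1 n2 n3 x a1 a2 a3 : 0 < n1 -> n1 < n2 -> n2 < n3 ->
  a1 * n1 + a2 * n2 + a3 * n3 = x -> a1 + a2 + a3 <= Lmax n1 n2 n3 x.
Proof.
move=> h1 h2 h3 e; have [l1 l2 l3 _] := fact_bound h1 h2 h3 e.
rewrite /Lmax.
apply: leq_trans (leq_bigmax (Ordinal l1)).
apply: leq_trans (leq_bigmax (Ordinal l2)).
apply: leq_trans (leq_bigmax (Ordinal l3)).
by rewrite /= /is_fact e eqxx.
Qed.

Lemma Lmax_le n1 n2 n3 x k :
  (forall a1 a2 a3, a1 * n1 + a2 * n2 + a3 * n3 = x -> a1 + a2 + a3 <= k) ->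
  Lmax n1 n2 n3 x <= k.
Proof.
move=> H; rewrite /Lmax.
apply/bigmax_leqP => i _; apply/bigmax_leqP => j _; apply/bigmax_leqP => l _.
rewrite /is_fact; case: eqP => // e; exact: H.
Qed.

Lemma lmin_le n1 n2 n3 x a1 a2 a3 : 0 < n1 -> n1 < n2 -> n2 < n3 ->
  a1 * n1 + a2 * n2 + a3 * n3 = x -> lmin n1 n2 n3 x <= a1 + a2 + a3.
Proof.
move=> h1 h2 h3 e; have [l1 l2 l3 _] := fact_bound h1 h2 h3 e.
rewrite /lmin.
apply: leq_trans (bigmin_le _ _ (Ordinal l1)) _.
apply: leq_trans (bigmin_le _ _ (Ordinal l2)) _.
apply: leq_trans (bigmin_le _ _ (Ordinal l3)) _.
by rewrite /= /is_fact e eqxx.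
Qed.

Lemma lmin_ge n1 n2 n3 x k : k <= x.+1 ->
  (forall a1 a2 a3, a1 * n1 + a2 * n2 + a3 * n3 = x -> k <= a1 + a2 + a3) ->
  k <= lmin n1 n2 n3 x.
Proof.
move=> hk H; rewrite /lmin.
apply: bigmin_ge => // i; apply: bigmin_ge => // j; apply: bigmin_ge => // l.
rewrite /is_fact; case: eqP => // e; exact: H.
Qed.

Definition factb n1 n2 n3 x m :=
  [exists a1 : 'I_x.+1, exists a2 : 'I_x.+1, exists a3 : 'I_x.+1,
     is_fact n1 n2 n3 x a1 a2 a3 && (a1 + a2 + a3 == m)].

Lemma factbP n1 n2 n3 x m : 0 < n1 -> n1 < n2 -> n2 < n3 ->
  reflect (exists a1 a2 a3, a1 * n1 + a2 * n2 + a3 * n3 = x /\ a1 + a2 + a3 = m)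
          (factb n1 n2 n3 x m).
Proof.
move=> h1 h2 h3; apply: (iffP idP).
  case/existsP=> a1 /existsP[a2 /existsP[a3 /andP[/eqP e /eqP l]]].
  by exists a1, a2, a3.
move=> [a1 [a2 [a3 [e l]]]]; have [l1 l2 l3 _] := fact_bound h1 h2 h3 e.
apply/existsP; exists (Ordinal l1); apply/existsP; exists (Ordinal l2).
apply/existsP; exists (Ordinal l3); by rewrite /is_fact /= e l !eqxx.
Qed.

Lemma Lmax_attain n1 n2 n3 x : 0 < n1 -> n1 < n2 -> n2 < n3 ->
  inM3 n1 n2 n3 x ->
  exists a1 a2 a3, a1 * n1 + a2 * n2 + a3 * n3 = x /\ a1 + a2 + a3 = Lmax n1 n2 n3 x.
Proof.
move=> h1 h2 h3 [b1 [b2 [b3 e]]].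
have exP : exists i, factb n1 n2 n3 x i.
  by exists (b1 + b2 + b3); apply/factbP => //; exists b1, b2, b3.
have ubP : forall i, factb n1 n2 n3 x i -> i <= x.
  move=> i /factbP-/(_ h1 h2 h3) [a1 [a2 [a3 [e' <-]]]].
  by have [] := fact_bound h1 h2 h3 e'.
case: (ex_maxnP exP ubP) => m /factbP-/(_ h1 h2 h3) [a1 [a2 [a3 [e' l]]]] mx.
exists a1, a2, a3; split => //; apply/eqP; rewrite eqn_leq.
rewrite (Lmax_ge h1 h2 h3 e') /= l; apply: Lmax_le => c1 c2 c3 ec.
by apply: mx; apply/factbP => //; exists c1, c2, c3.
Qed.

Lemma lmin_attain n1 n2 n3 x : 0 < n1 -> n1 < n2 -> n2 < n3 ->
  inM3 n1 n2 n3 x ->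
  exists a1 a2 a3, a1 * n1 + a2 * n2 + a3 * n3 = x /\ a1 + a2 + a3 = lmin n1 n2 n3 x.
Proof.
move=> h1 h2 h3 [b1 [b2 [b3 e]]].
have exP : exists i, factb n1 n2 n3 x i.
  by exists (b1 + b2 + b3); apply/factbP => //; exists b1, b2, b3.
case: (ex_minnP exP) => m /factbP-/(_ h1 h2 h3) [a1 [a2 [a3 [e' l]]]] mn.
exists a1, a2, a3; split => //; apply/eqP; rewrite eqn_leq.
rewrite (lmin_le h1 h2 h3 e') l andbT; apply: lmin_ge.
  have [_ _ _ ] := fact_bound h1 h2 h3 e'; rewrite l => hm; exact: leqW.
move=> c1 c2 c3 ec; apply: mn; apply/factbP => //; exists c1, c2, c3; split.
  by [].
by [].
Qed.

Lemma Lfail n1 n2 n3 x : 0 < n1 -> n1 < n2 -> n2 < n3 -> inM3 n1 n2 n3 x ->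
  Lmax n1 n2 n3 (x + n1) <> (Lmax n1 n2 n3 x).+1 ->
  exists b c A B C, b * n2 + c * n3 = x + n1 /\
    A.+1 * n1 + B * n2 + C * n3 = x + n1 /\ A.+1 + B + C < b + c /\
    (forall a1 a2 a3, a1 * n1 + a2 * n2 + a3 * n3 = x + n1 -> a1 + a2 + a3 <= b + c).
Proof.
move=> h1 h2 h3 hx hne.
have [A [B [C [eA lA]]]] := Lmax_attain h1 h2 h3 hx.
have hy : inM3 n1 n2 n3 (x + n1) by exists A.+1, B, C; rewrite -eA; lia.
have [p [q [r [ey ly]]]] := Lmax_attain h1 h2 h3 hy.
have eA' : A.+1 * n1 + B * n2 + C * n3 = x + n1 by rewrite -eA; lia.
have g1 := Lmax_ge h1 h2 h3 eA'.
have gt : (Lmax n1 n2 n3 x).+1 < Lmax n1 n2 n3 (x + n1).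
  rewrite ltn_neqAle eq_sym; apply/andP; split; first by apply/eqP.
  by rewrite -lA; lia.
case: p ey ly => [|p] ey ly.
  exists q, r, A, B, C; split; first by rewrite -ey; lia.
  split => //; split; first by rewrite ly; lia.
  by move=> a1 a2 a3 e; have := Lmax_ge h1 h2 h3 e; rewrite -ly; lia.
exfalso.
have e2 : p * n1 + q * n2 + r * n3 = x by move: ey; rewrite mulSn; lia.
have := Lmax_ge h1 h2 h3 e2; lia.
Qed.

Lemma lfail n1 n2 n3 x : 0 < n1 -> n1 < n2 -> n2 < n3 -> inM3 n1 n2 n3 x ->
  lmin n1 n2 n3 (x + n3) <> (lmin n1 n2 n3 x).+1 ->
  exists p d E1 E2 E3, p * n1 + d * n2 = x + n3 /\
    E1 * n1 + E2 * n2 + E3.+1 * n3 = x + n3 /\ p + d < E1 + E2 + E3.+1 /\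
    (forall a1 a2 a3, a1 * n1 + a2 * n2 + a3 * n3 = x + n3 -> p + d <= a1 + a2 + a3).
Proof.
move=> h1 h2 h3 hx hne.
have [A [B [C [eA lA]]]] := lmin_attain h1 h2 h3 hx.
have hy : inM3 n1 n2 n3 (x + n3) by exists A, B, C.+1; rewrite -eA; lia.
have [p [q [r [ey ly]]]] := lmin_attain h1 h2 h3 hy.
have eA' : A * n1 + B * n2 + C.+1 * n3 = x + n3 by rewrite -eA; lia.
have g1 := lmin_le h1 h2 h3 eA'.
have gt : lmin n1 n2 n3 (x + n3) < (lmin n1 n2 n3 x).+1.
  rewrite ltn_neqAle; apply/andP; split; first by apply/eqP.
  by rewrite -lA; lia.
case: r ey ly => [|r] ey ly.
  exists p, q, A, B, C; split; first by rewrite -ey; lia.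
  split => //; split; first by lia.
  by move=> a1 a2 a3 e; have := lmin_le h1 h2 h3 e; rewrite -ly; lia.
exfalso.
have e2 : p * n1 + q * n2 + r * n3 = x by move: ey; rewrite mulSn; lia.
have := lmin_le h1 h2 h3 e2; lia.
Qed.

Lemma combine n1 n2 n3 Y W b c A B C p d E1 E2 E3 :
  0 < n1 -> n1 < n2 -> n2 < n3 ->
  b * n2 + c * n3 = Y -> A.+1 * n1 + B * n2 + C * n3 = Y -> A.+1 + B + C < b + c ->
  (forall a1 a2 a3, a1 * n1 + a2 * n2 + a3 * n3 = Y -> a1 + a2 + a3 <= b + c) ->
  p * n1 + d * n2 = W -> E1 * n1 + E2 * n2 + E3.+1 * n3 = W -> p + d < E1 + E2 + E3.+1 ->
  (forall a1 a2 a3, a1 * n1 + a2 * n2 + a3 * n3 = W -> p + d <= a1 + a2 + a3) ->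
  False.
Proof.
move=> h1 h2 h3 eY1 eY2 lY HY eW1 eW2 lW HW.
have [t1 t2] : B < b /\ c < C by apply: (trade1 h1 h2 h3) lY; lia.
have [s1 s2] : E2 < d /\ p < E1 by apply: (trade2 h1 h2 h3) lW; lia.
have m1 : B * n2 <= b * n2 by rewrite leq_mul2r ltnW ?orbT.
have m2 : c * n3 <= C * n3 by rewrite leq_mul2r ltnW ?orbT.
have m3 : E2 * n2 <= d * n2 by rewrite leq_mul2r ltnW ?orbT.
have m4 : p * n1 <= E1 * n1 by rewrite leq_mul2r ltnW ?orbT.
have T1 : (b - B) * n2 = A.+1 * n1 + (C - c) * n3.
  rewrite !mulnBl; lia.
have T2 : (d - E2) * n2 = (E1 - p) * n1 + E3.+1 * n3.
  rewrite !mulnBl; lia.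
have [le1|lt1] := leqP (d - E2) b.
  have e : (E1 - p) * n1 + (b - (d - E2)) * n2 + (c + E3.+1) * n3 = Y.
    have m5 : (d - E2) * n2 <= b * n2 by rewrite leq_mul2r le1 orbT.
    rewrite [(b - _) * n2]mulnBl mulnDl; lia.
  have := HY _ _ _ e; lia.
have e : (p + A.+1) * n1 + (d - (b - B)) * n2 + (C - c) * n3 = W.
  have m5 : (b - B) * n2 <= d * n2.
    rewrite leq_mul2r; apply/orP; right; lia.
  rewrite [(d - _) * n2]mulnBl mulnDl; lia.
have := HW _ _ _ e; lia.
Qed.

Unset Implicit Arguments.

Theorem mainTheorem9 (n1 n2 n3 : nat) :
  n1 < n2 -> n2 < n3 ->
  numerical3 n1 n2 n3 ->
  minimal_gens3 n1 n2 n3 ->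
  (forall x, inM3 n1 n2 n3 x -> Lmax n1 n2 n3 (x + n1) = (Lmax n1 n2 n3 x).+1)
  \/
  (forall x, inM3 n1 n2 n3 x -> lmin n1 n2 n3 (x + n3) = (lmin n1 n2 n3 x).+1).
Proof.
move=> h2 h3 _ [hm _].
have h1 : 0 < n1.
  case: n1 hm {h2} => // hm; exfalso; apply: hm; exists 0, 0; by [].
destruct (classic (forall x, inM3 n1 n2 n3 x -> Lmax n1 n2 n3 (x + n1) = (Lmax n1 n2 n3 x).+1)) as [H|H].
  by left.
right => x' hx'.
case: (eqVneq (lmin n1 n2 n3 (x' + n3)) (lmin n1 n2 n3 x').+1) => // hne.
exfalso.
have [x [hx hnx]] : exists x, inM3 n1 n2 n3 x /\ Lmax n1 n2 n3 (x + n1) <> (Lmax n1 n2 n3 x).+1.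
  apply: NNPP => hn; apply: H => x hx; apply: NNPP => hn2; apply: hn; by exists x.
have [b [c [A [B [C [e1 [e2 [l HY]]]]]]]] := Lfail h1 h2 h3 hx hnx.
have [p [d [E1 [E2 [E3 [f1 [f2 [l' HW]]]]]]]] := lfail h1 h2 h3 hx' (elimN eqP hne).
exact: (combine h1 h2 h3 e1 e2 l HY f1 f2 l' HW).
Qed.
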